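(* Let $q\ge2$ be an integer and $d$ an even positive integer. Then the network $\mathcal{N}_1$ (with parameter $q$) has a $d$-dimensional VLNC solution over every finite field.
   Context: Vector linear network coding: each source $v$ generates $x_v\in F^d$; an edge out of a source $v$ carries $Ax_v$ for a $d\times d$ matrix $A$ over $F$; an edge out of an intermediate node carries $\sum A_{e',e}y_{e'}$ over the edges $e'$ entering that node; a terminal computes vectors $\sum B_ey_e$ over its incoming edges; a $d$-dimensional VLNC solution over $F$ is such a code with which every terminal computes each demanded message for all message choices. The Char-$q$-$s$ network (integer $q\ge2$): sources $s,x_1,\dots,x_{q+2}$; intermediate nodes $m_1,\dots,m_{q+3},n_1,\dots,n_{q+3}$; terminals $r_1,\dots,r_{q+3}$; edges: $(x_1,m_i)$ for $1\le i\le q+1$; $(s,m_1)$ and $(s,m_i)$ for $4\le i\le q+3$; $(x_i,m_j)$ for $2\le i,j\le q+2$, $i\ne j$; $(x_i,m_{q+3})$ for $1\le i\le q+2$; $e_i=(m_i,n_i)$ for $1\le i\le q+3$; $(n_i,r_i)$ for $1\le i\le q+2$; $(n_{q+3},r_i)$ and $(n_i,r_{q+3})$ for $1\le i\le q+2$; $(x_i,r_1)$ for $2\le i\le q+1$; $(x_1,r_{q+2})$; $(s,r_2)$; $(s,r_3)$. Demands: $r_1$ demands $x_{q+2}$; $r_i$ demands $x_i$ for $2\le i\le q+2$; $r_{q+3}$ demands $x_1$; no terminal demands $s$. The M-network: sources $a,b,x,y$; intermediate nodes $u_1,u_2,v_1,v_2,v_3$; terminals $t_1,\dots,t_4$; edges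 $(a,u_1),(b,u_1),(x,u_2),(y,u_2),(u_1,v_1),(u_1,v_3),(u_2,v_2),(u_2,v_3)$ and $(v_i,t_j)$ for $i=1,2,3$, $j=1,\dots,4$; demands: $t_1$ demands $a,x$; $t_2$ demands $a,y$; $t_3$ demands $b,x$; $t_4$ demands $b,y$. The network $\mathcal{N}_1$ is obtained from the disjoint union of the M-network and the Char-$q$-$s$ network by identifying source $x_1$ with $a$ and source $s$ with $y$ (so $a$ gets all edges out of $x_1$ and $y$ gets all edges out of $s$; terminal $r_{q+3}$ now demands $a$), and adding one new edge $(n_1,t_4)$. All other demands are unchanged. *)

(* Defs.v *)
From HB Require Import structures.
From mathcomp Require Import all_boot all_order all_algebra.
Set Implicit Arguments. Unset Strict Implicit. Unset Printing Implicit Defensive.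
Import GRing.Theory.
Local Open Scope ring_scope.

Record network := Network {
  node : eqType;
  nodes : seq node;
  source : pred node;
  edge : rel node;
  demand : rel node
}.
Arguments nodes : clear implicits.
Arguments source : clear implicits.
Arguments edge : clear implicits.
Arguments demand : clear implicits.

(* A d-dimensional vector linear network coding solution over F.
   - A u v        : the d x d matrix on the edge (u,v) out of a source u
                    (edge carries A u v *m x_u);
   - C w u v      : the coefficient matrix A_{e',e} with e' = (w,u), e = (u,v)
                    for an edge e out of a non-source node u;
   - Dc t v w     : the decoding matrix B_e used by terminal t, for the
                    demanded message v, on its incoming edge e = (w,t).
   For every choice of messages x, the edge signals y (uniquely determined
   by the local equations, the network being acyclic) satisfy the decoding
   equations. *)
Definition vlnc_solution (N : network) (F : fieldType) (d : nat) : Prop :=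
  exists (A : node N -> node N -> 'M[F]_d)
         (C : node N -> node N -> node N -> 'M[F]_d)
         (Dc : node N -> node N -> node N -> 'M[F]_d),
  forall x : node N -> 'cV[F]_d,
  exists y : node N -> node N -> 'cV[F]_d,
    (forall u v, edge N u v ->
       y u v = if source N u then A u v *m x u
               else \sum_(w <- nodes N | edge N w u) C w u v *m y w u)
    /\ (forall t v, demand N t v ->
       \sum_(w <- nodes N | edge N w t) Dc t v w *m y w t = x v).

(* Nodes: SY = s = y (identified), X i = x_i (X 1 = x_1 = a),          *)
(* Mi i = m_i, Ni i = n_i, R i = r_i, Bs = b, Xs = x (M-network),      *)
(* U1, U2, V i = v_i, T j = t_j.  Out-of-range indices are not nodes.  *)
Inductive n1node :=
  SY | X of nat | Mi of nat | Ni of nat | R of nat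
| Bs | Xs | U1 | U2 | V of nat | T of nat.

Definition n1enc (a : n1node) : nat * nat :=
  match a with
  | SY => (0, 0)%N | X i => (1, i)%N | Mi i => (2, i)%N | Ni i => (3, i)%N
  | R i => (4, i)%N | Bs => (5, 0)%N | Xs => (6, 0)%N | U1 => (7, 0)%N
  | U2 => (8, 0)%N | V i => (9, i)%N | T i => (10, i)%N
  end.
Definition n1dec (p : nat * nat) : option n1node :=
  match p with
  | (0, 0)%N => Some SY | (1, i)%N => Some (X i) | (2, i)%N => Some (Mi i)
  | (3, i)%N => Some (Ni i) | (4, i)%N => Some (R i) | (5, 0)%N => Some Bs
  | (6, 0)%N => Some Xs | (7, 0)%N => Some U1 | (8, 0)%N => Some U2
  | (9, i)%N => Some (V i) | (10, i)%N => Some (T i) | _ => None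
  end.
Lemma n1encK : pcancel n1enc n1dec. Proof. by case. Qed.
HB.instance Definition _ := Equality.copy n1node (pcan_type n1encK).

Local Open Scope nat_scope.

Definition N1_nodes (q : nat) : seq n1node :=
  [:: SY] ++ map X (iota 1 (q + 2)) ++ map Mi (iota 1 (q + 3))
  ++ map Ni (iota 1 (q + 3)) ++ map R (iota 1 (q + 3))
  ++ [:: Bs; Xs; U1; U2] ++ map V (iota 1 3) ++ map T (iota 1 4).

Definition N1_source (q : nat) (u : n1node) : bool :=
  match u with
  | SY | Bs | Xs => true
  | X i => (1 <= i <= q + 2)
  | _ => false
  end.

Definition N1_edge (q : nat) (u v : n1node) : bool :=
  match u, v with
  (* Char-q-s part (x_1 = a, s = y) *)
  | X i, Mi j => [&& i == 1 & 1 <= j <= q + 1]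
                 || [&& 2 <= i <= q + 2, 2 <= j <= q + 2 & i != j]
                 || [&& 1 <= i <= q + 2 & j == q + 3]
  | SY, Mi j => (j == 1) || (4 <= j <= q + 3)
  | Mi i, Ni j => [&& i == j & 1 <= i <= q + 3]
  | Ni i, R j => [&& i == j & 1 <= i <= q + 2]
                 || [&& i == q + 3 & 1 <= j <= q + 2]
                 || [&& 1 <= i <= q + 2 & j == q + 3]
  | X i, R j => [&& 2 <= i <= q + 1 & j == 1] || [&& i == 1 & j == q + 2]
  | SY, R j => (j == 2) || (j == 3)
  (* M-network part (a = X 1, y = SY) *)
  | X i, U1 => i == 1
  | Bs, U1 => true
  | Xs, U2 => true
  | SY, U2 => true
  | U1, V i => (i == 1) || (i == 3)
  | U2, V i => (i == 2) || (i == 3)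
  | V i, T j => [&& 1 <= i <= 3 & 1 <= j <= 4]
  (* the new edge (n_1, t_4) *)
  | Ni i, T j => [&& i == 1 & j == 4]
  | _, _ => false
  end.

(* demand t v : terminal t demands the message of source v *)
Definition N1_demand (q : nat) (t v : n1node) : bool :=
  match t, v with
  | R i, X j => [&& i == 1 & j == q + 2]
                || [&& 2 <= i <= q + 2 & j == i]
                || [&& i == q + 3 & j == 1]
  | T 1, X 1 => true | T 1, Xs => true
  | T 2, X 1 => true | T 2, SY => true
  | T 3, Bs => true  | T 3, Xs => true
  | T 4, Bs => true  | T 4, SY => true
  | _, _ => false
  end.

Definition N1 (q : nat) : network :=
  @Network n1node (N1_nodes q) (N1_source q) (N1_edge q) (N1_demand q).

(* Main.v *)
Require Import Defs.
From mathcomp Require Import all_boot all_order all_algebra.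
From mathcomp Require Import zify.
Set Implicit Arguments. Unset Strict Implicit. Unset Printing Implicit Defensive.
Import GRing.Theory.
Local Open Scope ring_scope.

Lemma sum_pick (W : nmodType) (s : seq nat) (t : nat) (F : nat -> W) :
  uniq s -> t \in s -> \sum_(i <- s | i == t) F i = F t.
Proof.
by move=> us ts; rewrite -big_filter filter_pred1_uniq // big_cons big_nil addr0.
Qed.

Lemma sum_nodes (W : nmodType) q (P : pred n1node) (G : n1node -> W) :
  \sum_(w <- N1_nodes q | P w) G w =
  \sum_(w <- [:: SY] | P w) G w +
  \sum_(i <- iota 1 (q+2) | P (X i)) G (X i) +
  \sum_(i <- iota 1 (q+3) | P (Mi i)) G (Mi i) +
  \sum_(i <- iota 1 (q+3) | P (Ni i)) G (Ni i) +
  \sum_(i <- iota 1 (q+3) | P (R i)) G (R i) +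
  \sum_(w <- [:: Bs; Xs; U1; U2] | P w) G w +
  \sum_(i <- iota 1 3 | P (V i)) G (V i) +
  \sum_(i <- iota 1 4 | P (T i)) G (T i).
Proof. by rewrite /N1_nodes !big_cat !big_map /= !addrA. Qed.


Definition Pl {F : fieldType} k : 'M[F]_(k+k) := block_mx 1%:M 0 0 0.
Definition Ph {F : fieldType} k : 'M[F]_(k+k) := block_mx 0 0 0 1%:M.
Definition JPl {F : fieldType} k : 'M[F]_(k+k) := block_mx 0 0 1%:M 0.
Definition JPh {F : fieldType} k : 'M[F]_(k+k) := block_mx 0 1%:M 0 0.

Definition cU1 {F : fieldType} k (j : nat) : 'M[F]_(k+k) :=
  match j with 1%N => Ph k | 2%N => Ph k | _ => Pl k end.
Definition cU2 {F : fieldType} k (j : nat) : 'M[F]_(k+k) :=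
  match j with 1%N => JPh k | 2%N => Pl k | 3%N => Ph k | _ => JPl k end.

Definition ex {F : fieldType} k q (x : n1node -> 'cV[F]_(k+k)) (j : nat) :=
  \sum_(i <- iota 1 (q+2) | N1_edge q (X i) (Mi j)) x (X i).

Definition ysig {F : fieldType} k q (x : n1node -> 'cV[F]_(k+k)) (u v : n1node)
  : 'cV[F]_(k+k) :=
  match u with
  | SY | X _ | Bs | Xs => x u
  | Mi j | Ni j => ex q x j
  | U1 => if v == V 1%N then Pl k *m x (X 1%N) + Ph k *m x Bs
          else Ph k *m x (X 1%N) + Pl k *m x Bs
  | U2 => if v == V 2%N then Pl k *m x Xs + Ph k *m x SY
          else Ph k *m x Xs + Pl k *m x SY
  | V 1%N => Pl k *m x (X 1%N) + Ph k *m x Bs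
  | V 2%N => Pl k *m x Xs + Ph k *m x SY
  | V _ => match v with
           | T j => cU1 k j *m (Ph k *m x (X 1%N) + Pl k *m x Bs)
                    + cU2 k j *m (Ph k *m x Xs + Pl k *m x SY)
           | _ => 0 end
  | _ => 0
  end.

Definition Cc {F : fieldType} k (w u v : n1node) : 'M[F]_(k+k) :=
  match u with
  | Mi _ => match w with X _ => 1%:M | _ => 0 end
  | Ni _ => 1%:M
  | U1 => match w with X _ => if v == V 1%N then Pl k else Ph k
                     | _ => if v == V 1%N then Ph k else Pl k end
  | U2 => match w with Xs => if v == V 2%N then Pl k else Ph k
                     | _ => if v == V 2%N then Ph k else Pl k end
  | V 3%N => match v with T j => match w with U1 => cU1 k j | _ => cU2 k j end
                      | _ => 0 end
  | V _ => 1%:M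
  | _ => 0
  end.

Definition dT {F : fieldType} k (j : nat) (v : n1node) (i : nat) : 'M[F]_(k+k) :=
  match v with
  | X _ => match i with 1%N => Pl k | 3%N => Ph k | _ => 0 end
  | Xs => match i with 2%N => Pl k | 3%N => if j == 1%N then JPl k else Ph k | _ => 0 end
  | Bs => match i with 1%N => Ph k | 3%N => Pl k | _ => 0 end
  | SY => match i with 2%N => Ph k | 3%N => if j == 2%N then Pl k else JPh k | _ => 0 end
  | _ => 0
  end.

Definition Dd {F : fieldType} k q (t v w : n1node) : 'M[F]_(k+k) :=
  match t with
  | R j => match w with
    | Ni i => if j == (q+3)%N then (if i == 1%N then 1%:M else 0)
              else if i == (q+3)%N then 1%:M else if i == j then - 1%:M else 0
    | X _ => - 1%:M
    | _ => 0 end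
  | T j => match w with V i => dT k j v i | _ => 0 end
  | _ => 0
  end.

Lemma sum_pickP (W : nmodType) (s : seq nat) (t : nat) (P : pred nat) (F : nat -> W) :
  uniq s -> t \in s -> {in s, forall i, P i = (i == t)} ->
  \sum_(i <- s | P i) F i = F t.
Proof.
move=> us ts hP; rewrite -big_filter (eq_in_filter hP) filter_pred1_uniq //.
by rewrite big_cons big_nil addr0.
Qed.

Ltac zz := let b := fresh "b" in set b := (if _ then _ else _);
  have -> : b = 0 by rewrite /b; case: ifP.

Lemma edges q k (F : fieldType) (x : n1node -> 'cV[F]_(k+k)) u v :
  N1_edge q u v ->
  ysig q x u v = if N1_source q u then 1%:M *m x u
     else \sum_(w <- N1_nodes q | N1_edge q w u) Cc k w u v *m ysig q x w u.
Proof.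
case: u => [|i|j|j|j| | | | |j|j] /= E.
- by rewrite mul1mx.
- have -> : (0 < i <= q + 2)%N by case: v E => //= *; lia.
  by rewrite mul1mx.
- rewrite /ex sum_nodes /= !big_cons !big_nil /= !big_pred0_eq.
  rewrite mul0mx !addr0; zz; rewrite add0r.
  by apply: eq_bigr => i _; rewrite mul1mx.
- have hj : (0 < j <= q + 3)%N by case: v E => //= *; lia.
  rewrite sum_nodes /= !big_cons !big_nil /= !big_pred0_eq ?addr0 ?add0r.
  rewrite (@sum_pickP _ _ j); rewrite ?mul1mx ?iota_uniq ?mem_iota //; try lia.
  by move=> i _; case: eqP => // ->; lia.
- by case: v E.
- by rewrite mul1mx.
- by rewrite mul1mx.
- case: v E => //= i E.
  rewrite sum_nodes /= !big_cons !big_nil /= !big_pred0_eq ?addr0 ?add0r.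
  rewrite (@sum_pickP _ _ 1%N); rewrite ?iota_uniq ?mem_iota //; try lia.
  by case/orP: E => /eqP ->.
- case: v E => //= i E.
  rewrite sum_nodes /= !big_cons !big_nil /= !big_pred0_eq ?addr0 ?add0r.
  by case/orP: E => /eqP -> /=; rewrite addrC.
- case: v E => //= i E.
  rewrite sum_nodes /= !big_cons !big_nil /= !big_pred0_eq ?addr0 ?add0r.
  have : [|| j == 1%N, j == 2%N | j == 3%N] by lia.
  case/or3P => /eqP -> /=; rewrite ?eqxx /= ?mul1mx ?addr0 ?add0r //.
- by [].
Qed.

Lemma decT q k (F : fieldType) (x : n1node -> 'cV[F]_(k+k)) j v :
  N1_demand q (T j) v ->
  \sum_(w <- N1_nodes q | N1_edge q w (T j)) Dd k q (T j) v w *m ysig q x w (T j) = x v.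
Proof.
move=> E.
rewrite sum_nodes /= !big_cons !big_nil /= !big_pred0_eq.
rewrite big1 => [|i _]; last exact: mul0mx.
move: E; case: j => [|[|[|[|[|j]]]]] //=; case: v => //=.
all: try (move=> i; case: i => [|[|i]] //=); move=> _.
all: rewrite -[x (X 1%N)]vsubmxK -[x Bs]vsubmxK -[x Xs]vsubmxK -[x SY]vsubmxK.
all: rewrite /Pl /Ph /JPl /JPh /= !mul_block_col !mul1mx !mul0mx ?addr0 ?add0r.
all: rewrite ?add_col_mx ?mul_block_col ?mul1mx ?mul0mx ?addr0 ?add0r ?add_col_mx ?addr0 ?add0r.
all: do 3 rewrite ?mul_block_col ?mul1mx ?mul0mx ?addr0 ?add0r ?add_col_mx.
all: done.
Qed.

Lemma sum_pick_val (W : nmodType) (s : seq nat) (t : nat) (P : pred nat) (F : nat -> W) G :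
  uniq s -> t \in s -> {in s, forall i, (if P i then F i else 0) = if i == t then G else 0} ->
  \sum_(i <- s | P i) F i = G.
Proof.
move=> us ts h; rewrite big_mkcond (eq_big_seq _ h) -big_mkcond /=.
by rewrite (@sum_pickP _ _ t) // => i _.
Qed.

Lemma sum_pick_if (W : nmodType) (s : seq nat) (t : nat) (G : W) :
  uniq s -> t \in s -> \sum_(i <- s) (if i == t then G else 0) = G.
Proof. by move=> us ts; rewrite -big_mkcond (@sum_pickP _ _ t) // => i _. Qed.

Ltac leaf := first [ (exfalso; lia)
  | (repeat match goal with H : is_true (_ == _) |- _ => move/eqP: H => H; subst end);
    rewrite ?mul1mx ?mul0mx ?mulNmx ?mul1mx ?oppr0 ?addr0 ?add0r ?subrr ?addNr; done ].
Ltac ifsplit := repeat (case: ifP => ?).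

Lemma decR q k (F : fieldType) (x : n1node -> 'cV[F]_(k+k)) j v :
  (2 <= q)%N -> N1_demand q (R j) v ->
  \sum_(w <- N1_nodes q | N1_edge q w (R j)) Dd k q (R j) v w *m ysig q x w (R j) = x v.
Proof.
move=> hq; case: v => //= j' E.
rewrite sum_nodes /= !big_cons !big_nil /= !big_pred0_eq.
rewrite mul0mx ?addr0; zz; rewrite add0r.
have [hj|hj] := boolP (j == (q+3)%N).
- have -> : j' = 1%N by lia.
  move/eqP: hj => ->.
  rewrite big_pred0; last by move=> i /=; lia.
  rewrite add0r.
  rewrite (@sum_pick_val _ _ 1%N _ _ (ex q x 1)) ?iota_uniq ?mem_iota //; try lia.
  2: by move=> i; rewrite mem_iota => hi; ifsplit; leaf.
  rewrite /ex. apply: (@sum_pickP _ _ 1%N (fun i => N1_edge q (X i) (Mi 1)) (fun i => x (X i)));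
    rewrite ?iota_uniq ?mem_iota //; first lia.
  move=> i; rewrite mem_iota => hi /=. lia.
have hjr : (0 < j <= q + 2)%N by lia.
rewrite [X in _ + X = _]big_mkcond [X in _ + X = _](eq_big_seq (fun i => (if i == (q+3)%N then ex q x (q+3) else 0)
   + (if i == j then - ex q x j else 0))); last first.
  by move=> i; rewrite mem_iota => hi; ifsplit; leaf.
rewrite big_split /= !sum_pick_if ?iota_uniq ?mem_iota //; try lia.
rewrite /ex big_mkcond [X in _ + (X - _)]big_mkcond [X in _ + (_ - X)]big_mkcond -sumrN.
rewrite -!big_split /= (eq_big_seq (fun i => if i == j' then x (X j') else 0)).
  by rewrite sum_pick_if ?iota_uniq ?mem_iota //; lia.
by move=> i; rewrite mem_iota => hi; ifsplit; leaf.
Qed.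

Lemma main_sol q k (F : fieldType) : (2 <= q)%N -> vlnc_solution (N1 q) F (k + k).
Proof.
move=> hq; exists (fun _ _ => 1%:M), (@Cc F k), (@Dd F k q) => x.
exists (ysig q x); split.
- by move=> u v E; apply: edges.
- move=> t v; case: t => //= j E.
  + exact: decR.
  + exact: decT.
Qed.

Theorem lemma7 (q d : nat) :
  (2 <= q)%N -> (0 < d)%N -> ~~ odd d ->
  forall F : finFieldType, vlnc_solution (N1 q) F d.
Proof.
move=> hq _ hd F.
have -> : d = (d./2 + d./2)%N by rewrite addnn -[LHS]odd_double_half (negbTE hd).
exact: main_sol.
Qed.
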